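(* In Smoluchowski's discrete model (defined in the context), for every $t\ge0$ there exists $\nu_t>0$ such that $\mathbb{P}(n^{(N)}_t\le\nu_t)\to0$ as $N\to\infty$.
   Context: Smoluchowski's discrete model: fix $N\ge2$ and $(\alpha(N))$ with $\alpha(N)\to\infty$, $\alpha(N)/N\to0$. Particles are $[N]$; each unordered pair $\{i,j\}$ gets an independent exponential clock with parameter $1/N$; initially no links. When a clock rings the link is created unless one of its ends belongs at that moment to a cluster (connected component of created links) of size $\ge\alpha(N)$, in which case it is never created. Particles in clusters of size $<\alpha(N)$ are in solution; $n^{(N)}_t$ is the number of particles in solution at time $t$ divided by $N$. *)

(* Defs.v *)
From HB Require Import structures.
From mathcomp Require Import all_boot all_order all_algebra.
From mathcomp Require Import all_classical all_reals all_analysis.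
Set Implicit Arguments. Unset Strict Implicit. Unset Printing Implicit Defensive.
Import Order.TTheory GRing.Theory Num.Theory.
Local Open Scope classical_set_scope.
Local Open Scope ring_scope.

(* Unordered pairs {i,j} of particles of [N] = 'I_N, represented as (i,j) with i < j. *)
Definition upair (N : nat) := {p : 'I_N * 'I_N | (p.1 < p.2)%N}.

Definition linked (N : nat) (E : {set upair N}) : rel 'I_N :=
  fun x y => [exists p : upair N, (p \in E) &&
     (((val p).1 == x) && ((val p).2 == y) || ((val p).1 == y) && ((val p).2 == x))].

Definition cluster_size (N : nat) (E : {set upair N}) (x : 'I_N) : nat :=
  #|[set y | connect (linked E) x y]|.

Definition ring_step (R : realType) (N : nat) (alpha : R)
    (E : {set upair N}) (p : upair N) : {set upair N} :=
  if ((cluster_size E (val p).1)%:R < alpha) && ((cluster_size E (val p).2)%:R < alpha)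
  then p |: E else E.

(* Set of links created by time t, given the ringing times w of the clocks:
   the clocks having rung by time t are processed in chronological order. *)
Definition links_at (R : realType) (N : nat) (alpha : R) (w : upair N -> R) (t : R)
    : {set upair N} :=
  foldl (ring_step alpha) (finset.set0 : {set upair N})
    (sort (fun p q => w p <= w q) [seq p <- enum {: upair N} | w p <= t]).

(* n_t^{(N)}: fraction of particles in solution (cluster size < alpha) at time t. *)
Definition sol_frac (R : realType) (N : nat) (alpha : R) (w : upair N -> R) (t : R) : R :=
  (#|[set x | (cluster_size (links_at alpha w t) x)%:R < alpha]|)%:R / N%:R.

Definition mutually_independent d (T : measurableType d) (R : realType)
    (P : probability T R) (I : finType) (X : I -> {RV P >-> R}) : Prop :=
  forall B : I -> set R, (forall i, measurable (B i)) ->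
    P (\bigcap_(i in [set: I]) (X i @^-1` B i)) = (\prod_(i : I) P (X i @^-1` B i))%E.

(* Main.v *)
Require Import Defs.
From HB Require Import structures.
From mathcomp Require Import all_boot all_order all_algebra.
From mathcomp Require Import all_classical all_reals all_analysis.
From mathcomp Require Import zify ring lra.
From mathcomp Require Import measurable_realfun lebesgue_measure.
Import Order.TTheory GRing.Theory Num.Theory.
Local Open Scope classical_set_scope.
Local Open Scope ring_scope.
Set Implicit Arguments. Unset Strict Implicit. Unset Printing Implicit Defensive.

Definition inp (N : nat) (x : 'I_N) (p : upair N) : bool :=
  ((val p).1 == x) || ((val p).2 == x).

Lemma card_inp (N : nat) (x : 'I_N) : (#|[pred p : upair N | inp x p]| <= N)%N.
Proof.
pose f (p : upair N) : 'I_N := if (val p).1 == x then (val p).2 else (val p).1.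
have inj : {in [pred p : upair N | inp x p] &, injective f}.
  move=> [[a b] hab] [[c e] hce]; rewrite !inE /inp /f /= => Hp Hq Hf.
  apply: val_inj => /=.
  case: (eqVneq a x) Hp Hf => ax Hp Hf; case: (eqVneq c x) Hq Hf => cx Hq Hf;
    rewrite /= in Hp Hq Hf.
  - by subst.
  - move/eqP: Hq => ex; subst; move: hce hab; rewrite /=; lia.
  - move/eqP: Hp => bx; subst; move: hce hab; rewrite /=; lia.
  - by move/eqP: Hp => bx; move/eqP: Hq => ex; subst.
rewrite -(card_in_imset inj); apply: leq_trans (max_card _) _; by rewrite card_ord.
Qed.

Lemma inp_uniq (N : nat) (x y : 'I_N) (p q : upair N) : x != y ->
  inp x p -> inp y p -> inp x q -> inp y q -> p = q.
Proof.
move: p q => [[a b] hab] [[c e] hce]; rewrite /inp /= => xy.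
move=> /orP[/eqP Hax|/eqP Hbx] /orP[/eqP Hay|/eqP Hby] /orP[/eqP Hcx|/eqP Hex] /orP[/eqP Hcy|/eqP Hey];
  subst; try (by rewrite eqxx in xy);
  apply: val_inj => /=; try reflexivity;
  move: hab hce; rewrite /=; lia.
Qed.

Lemma inp_ex (N : nat) (x y : 'I_N) : x != y -> exists p : upair N, inp x p && inp y p.
Proof.
move=> xy; case: (ltngtP x y) => h.
- by exists (exist _ (x, y) h); rewrite /inp /= !eqxx /= orbT.
- by exists (exist _ (y, x) h); rewrite /inp /= !eqxx /= orbT.
- by move: xy; rewrite (val_inj h) eqxx.
Qed.

Lemma foldl_sub (R : realType) (N : nat) (alpha : R) (s : seq (upair N)) E0 p :
  p \in foldl (ring_step alpha) E0 s -> (p \in E0) || (p \in s).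
Proof.
elim: s E0 => [|a s IH] E0 /=; first by rewrite orbF.
move=> /IH /orP[|]; last by move=> H; rewrite in_cons H !orbT.
rewrite /ring_step in_cons; case: ifP => _; last by move=> ->.
rewrite in_setU1 => /orP[/eqP ->|->]; by rewrite ?eqxx ?orbT.
Qed.

Lemma isolated_size (R : realType) (N : nat) (alpha : R) (w : upair N -> R) (t : R)
  (x : 'I_N) : (forall p, inp x p -> t < w p) ->
  cluster_size (links_at alpha w t) x = 1%N.
Proof.
move=> Hx.
have nl : forall y, linked (links_at alpha w t) x y = false.
  move=> y; apply/negbTE/negP; rewrite /linked => /existsP [p /andP [pE hp]].
  move: (foldl_sub pE); rewrite finset.in_set0 /= mem_sort mem_filter => /andP [wp _].
  have : inp x p by rewrite /inp; case/orP: hp => [/andP[/eqP -> _]|/andP[_ /eqP ->]]; rewrite eqxx ?orbT.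
  by move=> /Hx; rewrite ltNge wp.
rewrite /cluster_size -(card1 x); apply: eq_card => y.
apply/idP/idP; last first.
  rewrite !inE => /eqP ->; exact: connect0.
rewrite !inE /=.
case/connectP => [[|z s]] /=; first by move=> _ ->.
by rewrite nl.
Qed.

Lemma sq_expand (R : realType) (Z m : R) :
  Z ^+ 2 + (- (2 * m) * Z + m ^+ 2) = (Z - m) ^+ 2.
Proof. ring. Qed.

Section comb.
Context d (T : measurableType d) (R : realType) (P : probability T R).

Lemma int_comb (I : finType) (c : I -> R) (B : I -> set T) :
  (forall i, measurable (B i)) ->
  P.-integrable setT (fun om => (\sum_i c i * \1_(B i) om)%:E) /\
  (\int[P]_om (\sum_i c i * \1_(B i) om)%:E = (\sum_i c i * fine (P (B i)))%:E)%E.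
Proof.
move=> mB.
have ii : forall i, P.-integrable setT (fun om => (c i)%:E * (\1_(B i) om)%:E)%E.
  move=> i; apply: integrableZl; first exact: measurableT; exact: (integrable_indic P (mB i)).
have e1 : (fun om => (\sum_i c i * \1_(B i) om)%:E) =
          (fun om => \sum_i ((c i)%:E * (\1_(B i) om)%:E))%E.
  by apply: funext => om; rewrite -sumEFin; apply: eq_bigr => i _; rewrite EFinM.
rewrite e1; split; first by apply: (integrable_sum measurableT) => i _; exact: ii.
rewrite integral_sum; [|exact: measurableT|exact: ii]; rewrite -sumEFin; apply: eq_bigr => i _.
rewrite integralZl; [|exact: measurableT|exact: (integrable_indic P (mB i))].
rewrite (integral_indic _ measurableT (mB i)) setIT EFinM fineK //.
exact: fin_num_measure.
Qed.

Lemma markov2 (I : finType) (A : I -> set T) (mA : forall i, measurable (A i))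
  (E : set T) (mE : measurable E) (c m : R) :
  (forall om, E om -> c <= (\sum_i \1_(A i) om - m) ^+ 2) -> 0 <= c ->
  c * fine (P E) <= \sum_i \sum_j fine (P (A i `&` A j))
                    - 2 * m * \sum_i fine (P (A i)) + m ^+ 2.
Proof.
move=> HE c0.
pose cc : ((I * I) + (I + 'I_1))%type -> R := fun k =>
  match k with inl _ => 1 | inr (inl _) => - (2 * m) | inr (inr _) => m ^+ 2 end.
pose BB : ((I * I) + (I + 'I_1))%type -> set T := fun k =>
  match k with inl ij => A ij.1 `&` A ij.2 | inr (inl i) => A i | inr (inr _) => setT end.
have mBB : forall k, measurable (BB k).
  by case=> [[i j]|[i|_]] /=; [exact: measurableI | exact: mA | exact: measurableT].
have geq : forall om, \sum_k cc k * \1_(BB k) om = (\sum_i \1_(A i) om - m) ^+ 2.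
  move=> om; rewrite !big_sumType /= big_ord1 /= indicT /= mulr1.
  rewrite -(pair_big xpredT xpredT (fun i j => 1 * \1_(A i `&` A j) om)) /=.
  have -> : \sum_i \sum_j 1 * \1_(A i `&` A j) om = (\sum_i \1_(A i) om) ^+ 2 :> R.
    rewrite expr2 mulr_suml; apply: eq_bigr => i _; rewrite mulr_sumr.
    by apply: eq_bigr => j _; rewrite indicI mul1r.
  rewrite -mulr_sumr; move: (\sum_i _) => Z. exact: sq_expand.
have req : \sum_k cc k * fine (P (BB k)) =
    \sum_i \sum_j fine (P (A i `&` A j)) - 2 * m * \sum_i fine (P (A i)) + m ^+ 2.
  rewrite !big_sumType /= big_ord1 /= probability_setT /= mulr1.
  rewrite -(pair_big xpredT xpredT (fun i j => 1 * fine (P (A i `&` A j)))) /=.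
  under eq_bigr do under eq_bigr do rewrite mul1r.
  by rewrite -mulr_sumr mulNr addrA.
have [i1 e1] := int_comb (B := fun _ : 'I_1 => E) (fun _ : 'I_1 => c) (fun _ => mE).
have [i2 e2] := int_comb cc mBB.
have := le_integral measurableT i1 i2.
rewrite e1 e2 lee_fin big_ord1 req; apply => om _.
rewrite lee_fin big_ord1 geq.
have [Eom|nEom] := pselect (E om).
  by rewrite indicE mem_set // mulr1; exact: HE.
by rewrite indicE memNset // mulr0 sqr_ge0.
Qed.

End comb.

Lemma exp_tail (R : realType) (r s : R) : 0 < r -> 0 < s ->
  exponential_prob r `]s, +oo[ = (expR (- r * s))%:E.
Proof.
move=> r0 s0.
have mf : measurable_fun setT (EFin \o exponential_pdf r).
  by apply/measurable_EFinP; exact: measurable_exponential_pdf.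
have f0 : forall x, (0 <= (exponential_pdf r x)%:E)%E.
  by move=> x; rewrite lee_fin exponential_pdf_ge0 // ltW.
have tot := integral_exponential_pdf r0.
have sp1 : [set: R] = `]-oo, s] `|` `]s, +oo[.
  by rewrite -setCitvl setUv.
have sp2 : [set` `]-oo, s]] = `]-oo, 0%R[ `|` `[0%R, s].
  by apply: itv_bndbnd_setU; rewrite // bnd_simp ltW.
have tot' : (\int[lebesgue_measure]_(x in `]-oo, s] `|` `]s, +oo[) (exponential_pdf r x)%:E = 1)%E.
  by rewrite -sp1.
have d1 : [disjoint `]-oo, s] & `]s, +oo[] by rewrite -setCitvl; apply/disj_setPCl.
have d2 : [disjoint `]-oo, 0%R[ & `[0%R, s]].
  apply/disj_setPS => x [] /=; rewrite !in_itv /= => x0 /andP[x0' _].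
  by move: x0'; rewrite leNgt x0.
move: tot'; rewrite ge0_integral_setU //; last exact: measurable_funTS.
rewrite sp2 ge0_integral_setU //; last exact: measurable_funTS.
rewrite integral0_eq; last first.
  by move=> x /=; rewrite in_itv /= => x0; rewrite lt0_exponential_pdf.
have := exponential_prob_itv0c r s0; rewrite /exponential_prob => ->.
rewrite add0e.
set I2 := (\int[_]_(x in _) _)%E.
have I20 : (0 <= I2)%E by apply: integral_ge0 => x _; exact: f0.
move: I2 I20 => [x||] //= x0 H.
- move: H; rewrite -EFinB -EFinD => /eqP; rewrite eqe => /eqP H.
  congr (_%:E); lra.
Qed.

Lemma meas_le d (T : measurableType d) (R : realType) (f g : T -> R) (b : bool) :
  measurable_fun setT f -> measurable_fun setT g ->
  measurable [set om | (f om <= g om) = b].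
Proof.
move=> mf mg.
have m1 : measurable [set om | f om <= g om].
  have := measurable_funB mg mf measurableT (measurable_itv `[0, +oo[).
  rewrite setTI; congr measurable; apply/seteqP; split => om /=;
    rewrite in_itv /= andbT subr_ge0 //.
case: b; first exact: m1.
have := measurableC m1; congr measurable; apply/seteqP; split => om /=.
+ by move=> H; apply/negbTE/negP.
+ by move=> H; rewrite H.
Qed.

Definition Gpat (R : realType) (N : nat) (alpha : R)
  (rf : {ffun upair N * upair N -> bool} * {ffun upair N -> bool}) : R :=
  (#|[set x | (cluster_size (foldl (ring_step alpha) (finset.set0 : {set upair N})
     (sort (fun p q => rf.1 (p, q)) [seq p <- enum {: upair N} | rf.2 p])) x)%:R < alpha]|)%:R
  / N%:R.

Definition pat (R : realType) (N : nat) (w : upair N -> R) (t : R) :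
  {ffun upair N * upair N -> bool} * {ffun upair N -> bool} :=
  ([ffun pq => w pq.1 <= w pq.2], [ffun p => w p <= t]).

Lemma Gpat_sol (R : realType) (N : nat) (alpha : R) (w : upair N -> R) (t : R) :
  sol_frac alpha w t = Gpat alpha (pat w t).
Proof.
have E1 : (fun p q => (pat w t).1 (p, q)) = (fun p q => w p <= w q).
  by apply: funext => p; apply: funext => q; rewrite ffunE.
have E2 : (fun p => (pat w t).2 p) = (fun p => w p <= t).
  by apply: funext => p; rewrite ffunE.
by rewrite /Gpat E1 E2.
Qed.

Lemma sol_meas (R : realType) (N : nat) (alpha : R) d (T : measurableType d)
  (P : probability T R) (tau : upair N -> {RV P >-> R}) (t nu : R) :
  measurable [set om | sol_frac alpha (fun p => tau p om) t <= nu].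
Proof.
have -> : [set om | sol_frac alpha (fun p => tau p om) t <= nu] =
  \bigcup_(rf in [set rf | Gpat alpha rf <= nu])
     ((\bigcap_(pq in [set: upair N * upair N])
         [set om | (tau pq.1 om <= tau pq.2 om) = rf.1 pq]) `&`
      (\bigcap_(p in [set: upair N]) [set om | (tau p om <= t) = rf.2 p])).
  apply/seteqP; split => om /=.
  - move=> H; exists (pat (fun p => tau p om) t); first by rewrite /= -Gpat_sol.
    by split => [pq _|p _] /=; rewrite ffunE.
  - move=> [rf /= Hrf [H1 H2]].
    have E : rf = pat (fun p => tau p om) t.
      case: rf Hrf H1 H2 => [r f] /= Hrf H1 H2; congr (_, _); apply/ffunP => x;
        rewrite ffunE; [exact: (esym (H1 x I)) | exact: (esym (H2 x I))].
    by move: Hrf; rewrite E -Gpat_sol.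
apply: fin_bigcup_measurable; first exact: finite_finset.
move=> rf _; apply: measurableI.
- apply: fin_bigcap_measurable; first exact: finite_finset.
  by move=> pq _; apply: meas_le; exact: measurable_funPT.
- apply: fin_bigcap_measurable; first exact: finite_finset.
  by move=> p _; apply: meas_le; [exact: measurable_funPT | exact: measurable_cst].
Qed.

Section indep.
Context (R : realType) (N : nat) d (T : measurableType d) (P : probability T R)
  (tau : upair N -> {RV P >-> R})
  (Hind : mutually_independent tau)
  (Hdist : forall (p : upair N) (B : set R), measurable B ->
          P (tau p @^-1` B) = exponential_prob (N%:R^-1 : R) B)
  (s : R) (s0 : 0 < s) (N0 : (0 < N)%N).

Definition ev (S : pred (upair N)) := [set om | forall p, S p -> s < tau p om].
Let q := expR (- N%:R^-1 * s).

Let Bf (S : pred (upair N)) (p : upair N) : set R := if S p then [set` `]s, +oo[] else setT.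

Let mBf S p : measurable (Bf S p).
Proof. rewrite /Bf; case: ifP => _; [exact: measurable_itv | exact: measurableT]. Qed.

Let evE S : ev S = \bigcap_(i in [set: upair N]) (tau i @^-1` Bf S i).
Proof.
apply/seteqP; split => om /=.
- move=> H p _ /=; rewrite /Bf; case: ifP => // Sp.
  by rewrite /= in_itv /= andbT; exact: H.
- move=> H p Sp; have := H p I; rewrite /Bf Sp /= in_itv /= andbT; exact.
Qed.

Lemma ev_meas S : measurable (ev S).
Proof.
rewrite evE; apply: fin_bigcap_measurable; first exact: finite_finset.
by move=> i _; apply: measurable_funPTI.
Qed.

Lemma Pev S : P (ev S) = (\prod_p (if S p then q else 1))%:E.
Proof.
rewrite evE (Hind (mBf S)) -prodEFin; apply: eq_bigr => p _.
rewrite /Bf; case: ifP => _.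
- by rewrite Hdist ?exp_tail ?invr_gt0 ?ltr0n //; exact: measurable_itv.
- by rewrite preimage_setT probability_setT.
Qed.

Lemma bound_N (alpha t : R) : t < s -> 1 < alpha ->
  fine (P [set om | sol_frac alpha (fun p => tau p om) t <= expR (- s) / 2]) <=
  4 * expR s * N%:R^-1 + 4 * (expR (s * N%:R^-1) - 1).
Proof.
move=> ts a1.
set E := [set om | _].
have mE : measurable E by exact: sol_meas.
have Nr0 : (0 : R) < N%:R by rewrite ltr0n.
set iq := expR (s * N%:R^-1).
have qiq : q * iq = 1 by rewrite /q /iq -expRD mulNr [s * _]mulrC addNr expR0.
have q0 : 0 < q by exact: expR_gt0.
have iq0 : 0 < iq by exact: expR_gt0.
pose A x := ev (inp x).
have mA : forall x, measurable (A x) by move=> x; exact: ev_meas.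
pose a x := fine (P (A x)).
have aE : forall x, a x = \prod_p (if inp x p then q else 1).
  by move=> x; rewrite /a /A Pev.
have q1 : q <= 1.
  rewrite /q expR_le1; have : 0 <= N%:R^-1 * s by rewrite mulr_ge0 // ?invr_ge0 // ltW.
  lra.
have alow : forall x, expR (- s) <= a x.
  move=> x; rewrite aE -big_mkcond /= prodr_const.
  apply: (@le_trans _ _ (q ^+ N)).
    by rewrite /q -expRM_natl mulrA mulrN divff ?gt_eqF // mulN1r.
  apply: ler_wiXn2l => //; first exact: ltW.
  exact: card_inp.
have a0 : forall x, 0 <= a x by move=> x; apply: le_trans (alow x); exact: ltW (expR_gt0 _).
set m := \sum_x a x.
have mlow : N%:R * expR (- s) <= m.
  apply: (@le_trans _ _ (\sum_(x < N) expR (- s))); last by apply: ler_sum => x _; exact: alow.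
  by rewrite sumr_const card_ord mulr_natl.
have m0 : 0 < m by apply: lt_le_trans mlow; rewrite mulr_gt0 // expR_gt0.
have diagE : forall x, fine (P (A x `&` A x)) = a x by move=> x; rewrite setIid.
have pairE : forall x y, x != y -> fine (P (A x `&` A y)) = a x * a y * iq.
  move=> x y xy.
  have -> : A x `&` A y = ev (fun p => inp x p || inp y p).
    apply/seteqP; split => om /=.
    - by move=> [Hx Hy] p /orP[]; [exact: Hx | exact: Hy].
    - by move=> H; split => p hp; apply: H; rewrite hp ?orbT.
  rewrite Pev /= !aE -big_split /=.
  have [p0 /andP [hx0 hy0]] := inp_ex xy.
  rewrite (bigD1 p0) //= [X in _ = X * _](bigD1 p0) //= hx0 hy0 /=.
  have -> : \prod_(p | p != p0) (if inp x p || inp y p then q else 1) =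
            \prod_(p | p != p0) ((if inp x p then q else 1) * (if inp y p then q else 1)).
    apply: eq_bigr => p pp0.
    case: (boolP (inp x p)) => hx; case: (boolP (inp y p)) => hy //=; rewrite ?mulr1 ?mul1r //.
    by move: pp0; rewrite (inp_uniq xy hx hy hx0 hy0) eqxx.
  set Q := \prod_(p | p != p0) _.
  by rewrite -[LHS]mulr1 -qiq; ring.
have sumb : \sum_x \sum_y fine (P (A x `&` A y)) <= m + m ^+ 2 * iq.
  have -> : m ^+ 2 * iq = \sum_x \sum_y a x * a y * iq.
    rewrite expr2 mulr_suml mulr_suml; apply: eq_bigr => x _.
    by rewrite mulr_sumr mulr_suml; apply: eq_bigr => y _.
  rewrite /m -big_split /=; apply: ler_sum => x _.
  rewrite (bigD1 x) //= diagE [X in _ <= _ + X](bigD1 x) //= lerD2l.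
  rewrite -[X in X <= _]add0r; apply: lerD; first by rewrite !mulr_ge0 // ltW.
  by apply: ler_sum => y yx; rewrite pairE // eq_sym.
pose Z om := \sum_x (\1_(A x) om : R).
have HE : forall om, E om -> (m / 2) ^+ 2 <= (Z om - m) ^+ 2.
  move=> om Eom.
  set S := [set x | (cluster_size (links_at alpha (fun p => tau p om) t) x)%:R < alpha].
  have Zle : Z om <= (#|S|)%:R.
    apply: (@le_trans _ _ (\sum_x ((x \in S) : nat)%:R)).
      apply: ler_sum => x _; rewrite indicE.
      case: (boolP (om \in A x)) => h; last by rewrite ler0n.
      suff -> : x \in S by [].
      apply/mem_set; rewrite /S /= isolated_size; first by [].
      move=> p hp.
      by apply: lt_trans ts _; move/set_mem: h; apply.
    rewrite -natr_sum ler_nat -sum1_card big_mkcond /=; apply: eq_leq.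
    by rewrite [RHS]big_mkcond; apply: eq_bigr => x _; case: (x \in S).
  have Zm : Z om <= m / 2.
    apply: (le_trans Zle).
    move: Eom; rewrite /E /= /sol_frac -/S => Eom.
    have : (#|S|)%:R <= N%:R * (expR (- s) / 2).
      by rewrite -(ler_pM2l Nr0) in Eom; rewrite mulrCA divff ?gt_eqF // mulr1 in Eom.
    move=> h; apply: (le_trans h); rewrite mulrA ler_pM2r //; lra.
  have Z0 : 0 <= Z om by apply: sumr_ge0 => x _; rewrite indicE ler0n.
  nra.
have := markov2 P mA mE HE (sqr_ge0 _).
have -> : \sum_i fine (P (A i)) = m by [].
move=> H.
have key : (m / 2) ^+ 2 * fine (P E) <= m + m ^+ 2 * (iq - 1).
  apply: (le_trans H); move: sumb; lra.
have pE0 : 0 <= fine (P E) by apply: fine_ge0.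
have miq : m * (4 * expR s * N%:R^-1) >= 4.
  have : N%:R * expR (- s) * (4 * expR s * N%:R^-1) = 4.
    have e0 : expR s != 0 by rewrite gt_eqF // expR_gt0.
    have n0 : N%:R != 0 :> R by rewrite gt_eqF.
    rewrite expRN; field.
    by rewrite e0 n0.
  move=> h; rewrite -[leLHS]h ler_pM2r //; rewrite !mulr_gt0 ?invr_gt0 ?expR_gt0 ?ltr0n //.
set B := 4 * expR s * N%:R^-1 in miq *.
have m2 : 0 < m ^+ 2 by rewrite exprn_gt0.
rewrite -(ler_pM2l m2).
have h2 : m * 4 <= m * (m * B) by rewrite ler_pM2l.
move: key h2; rewrite expr2; lra.
Qed.

End indep.

Lemma hinv_lem (R : realType) : (fun N : nat => N%:R^-1 : R) @ \oo --> 0.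
Proof.
have := @cvgr_idn R.
rewrite -gtr0_cvgV0; first by [].
by near=> N; rewrite ltr0n; near: N; exists 1%N.
Unshelve. all: end_near.
Qed.

Theorem lemma2p6 (R : realType) (alpha : nat -> R)
  (Halpha_oo : alpha @ \oo --> +oo)
  (Halpha_o : (fun N : nat => alpha N / N%:R) @ \oo --> 0)
  (t : R) (ht : 0 <= t) :
  exists nu : R, 0 < nu /\
  forall (d : nat -> measure_display) (T : forall N : nat, measurableType (d N))
    (P : forall N : nat, probability (T N) R)
    (tau : forall N : nat, upair N -> {RV P N >-> R}),
    (forall N : nat, (2 <= N)%N ->
       mutually_independent (tau N) /\
       (forall (p : upair N) (B : set R), measurable B ->
          P N (tau N p @^-1` B) = exponential_prob (N%:R^-1 : R) B)) ->
    (fun N : nat => P N [set om | sol_frac (alpha N) (fun p => tau N p om) t <= nu])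
      @ \oo --> 0%E.
Proof.
pose s := t + 1.
have s0 : 0 < s by rewrite /s; lra.
have ts : t < s by rewrite /s; lra.
exists (expR (- s) / 2); split; first by rewrite divr_gt0 ?expR_gt0.
move=> d T P tau H.
pose b := fun N : nat => 4 * expR s * N%:R^-1 + 4 * (expR (s * N%:R^-1) - 1).
have hinv : (fun N : nat => N%:R^-1 : R) @ \oo --> 0.
  exact: hinv_lem.
have bcvg : b @ \oo --> 0.
  have -> : (0:R) = 4 * expR s * 0 + 4 * (expR (s * 0) - 1).
    by rewrite !mulr0 expR0 subrr mulr0 addr0.
  apply: cvgD.
  - by apply: cvgMl_tmp; exact: hinv.
  - apply: cvgMl_tmp.
    apply: (@cvgB _ _ _ _ _ (fun N : nat => expR (s * N%:R^-1)) (cst 1)); last exact: cvg_cst.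
    apply: (cvg_comp _ _ (cvgMl_tmp (a := s) hinv)).
    exact: continuous_expR.
have ha : \forall N \near \oo, 1 < alpha N.
  by move: Halpha_oo => /cvgryPgt; apply.
apply: (@squeeze_cvge _ _ _ _ (cst 0%E) _ (EFin \o b)).
- near=> N.
  have hN : (2 <= N)%N by near: N; exists 2%N.
  have a1 : 1 < alpha N by near: N; exact: ha.
  have [Hind Hdist] := H N hN.
  have N0 : (0 < N)%N by apply: leq_trans hN.
  have bN := bound_N Hind Hdist s0 N0 ts a1.
  apply/andP; split; first exact: measure_ge0.
  have hfin : P N [set om | sol_frac (alpha N) (fun p => tau N p om) t <= expR (- s) / 2] \is a fin_num.
    by apply: fin_num_measure; exact: sol_meas.
  rewrite /= -(fineK hfin) lee_fin.
  exact: bN.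
- exact: cvg_cst.
- apply: cvg_EFin; last exact: bcvg.
  by near=> N.
Unshelve. all: end_near.
Qed.
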